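(* Let $s_\beta$ be the base phi sum of digits function. Consider the alphabet $\{0,1,2,\dots\}\times\{c_0,c_1,c_2,c_3\}$, writing letters as pairs $(j,c)$, and the morphism $\gamma$ defined for all $j\ge0$ by $\gamma((j,c_0))=(j,c_0)(j,c_1)$, $\gamma((j,c_1))=(j,c_2)(j,c_3)$, $\gamma((j,c_2))=(j+2,c_0)(j+2,c_1)(j+2,c_2)$, $\gamma((j,c_3))=(j+1,c_3)(j+2,c_2)(j+1,c_3)$. Let $x_\gamma=\lim_n\gamma^n((0,c_0))$ be the fixed point of $\gamma$ with initial letter $(0,c_0)$, and let $\delta$ be the morphism from this alphabet to words over the nonnegative integers given by $\delta((j,c_0))=(j,\,j+1)$, $\delta((j,c_1))=(j+2)$, $\delta((j,c_2))=(j+2,\,j+3)$, $\delta((j,c_3))=(j+3,\,j+3)$. Then $\delta(x_\gamma)$ equals the sequence $(s_\beta(N))_{N\ge0}$.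
   Context: Let $\varphi=(1+\sqrt5)/2$. Every natural number $N$ can be written uniquely (ignoring leading and trailing zeros) as a finite sum $N=\sum_{i=R}^{L}d_i\varphi^i$ with $i$ ranging over integers (possibly negative), digits $d_i\in\{0,1\}$, and no two consecutive digits $d_i,d_{i+1}$ both equal to $1$ (base phi expansion). The base phi sum of digits function $s_\beta(N)$ is the number of digits equal to $1$ in this expansion, with $s_\beta(0)=0$. The image of an infinite word under a morphism is the concatenation of the images of its letters. *)

(* Defs.v *)
From Stdlib Require Import Reals List ZArith Arith ClassicalEpsilon.
Import ListNotations.
Open Scope R_scope.

Definition phi : R := (1 + sqrt 5) / 2.

(** A base-phi expansion of N, given as the list S of (integer) positions i
    with digit d_i = 1: positions are distinct, no two consecutive positions
    both carry a 1, and N = sum_{i in S} phi^i. *)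
Definition phi_expansion (N : nat) (S : list Z) : Prop :=
  NoDup S /\
  (forall i, In i S -> ~ In (i + 1)%Z S) /\
  fold_right (fun i acc => powerRZ phi i + acc) 0 S = INR N.

(** s_beta(N): the number of digits 1 in the (unique) base-phi expansion of N.
    (Chosen by Hilbert epsilon; the expansion exists and is unique.) *)
Definition sbeta (N : nat) : nat :=
  epsilon (inhabits 0%nat)
    (fun k => exists S, phi_expansion N S /\ length S = k).

Inductive col : Type := c0 | c1 | c2 | c3.
Definition letter : Type := (nat * col)%type.

Definition gamma (a : letter) : list letter :=
  let (j, c) := a in
  match c with
  | c0 => [(j, c0); (j, c1)]
  | c1 => [(j, c2); (j, c3)]
  | c2 => [(j+2, c0); (j+2, c1); (j+2, c2)]
  | c3 => [(j+1, c3); (j+2, c2); (j+1, c3)]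
  end%nat.

Definition gamma_word (w : list letter) : list letter := flat_map gamma w.

Definition gamma_iter (n : nat) : list letter :=
  Nat.iter n gamma_word [(0%nat, c0)].

(** The fixed point x_gamma = lim_n gamma^n((0,c0)), as an infinite word
    nat -> letter: its i-th letter is the i-th letter of gamma^(i+1)((0,c0))
    (each gamma^n((0,c0)) is a prefix of gamma^(n+1)((0,c0)), and
    |gamma^(i+1)((0,c0))| >= 2^(i+1) > i). *)
Definition x_gamma (i : nat) : letter := nth i (gamma_iter (S i)) (0%nat, c0).

Definition delta (a : letter) : list nat :=
  let (j, c) := a in
  match c with
  | c0 => [j; j+1]
  | c1 => [j+2]
  | c2 => [j+2; j+3]
  | c3 => [j+3; j+3]
  end%nat.

(** Image of an infinite word under delta (delta is non-erasing, so the
    N-th letter of delta(x) lies within delta(x_0 ... x_N)). *)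
Definition delta_inf (x : nat -> letter) (N : nat) : nat :=
  nth N (flat_map delta (map x (seq 0 (S N)))) 0%nat.

(* Main.v *)
From Pilot Require Import Defs.
From Stdlib Require Import Reals List ZArith Arith Lia Lra ClassicalEpsilon.
Import ListNotations.
Open Scope R_scope.

Lemma phi_sq : phi * phi = phi + 1.
Proof. unfold phi. assert (H := sqrt_sqrt 5 ltac:(lra)). nra. Qed.

Lemma phi_gt1 : 1 < phi.
Proof. unfold phi. assert (1 < sqrt 5).
  { rewrite <- sqrt_1. apply sqrt_lt_1; lra. } lra. Qed.

Lemma phi_neq0 : phi <> 0.
Proof. pose proof phi_gt1; lra. Qed.

Definition sumphi (S : list Z) : R := fold_right (fun i acc => powerRZ phi i + acc) 0 S.
Definition valid (S : list Z) : Prop := NoDup S /\ (forall i, In i S -> ~ In (i + 1)%Z S).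

Lemma sumphi_app A B : sumphi (A ++ B) = sumphi A + sumphi B.
Proof. induction A; simpl; [lra| unfold sumphi in *; simpl; rewrite IHA; lra]. Qed.

Lemma sumphi_nonneg S : 0 <= sumphi S.
Proof. induction S; simpl; [lra|]. pose proof (powerRZ_lt phi a ltac:(pose proof phi_gt1; lra)).
  unfold sumphi in *; simpl; lra. Qed.

Lemma pRZ_succ m : powerRZ phi (m + 1) = powerRZ phi m * phi.
Proof. rewrite powerRZ_add by apply phi_neq0. simpl. ring. Qed.

Lemma pRZ_mono a b : (a <= b)%Z -> powerRZ phi a <= powerRZ phi b.
Proof. intros H. replace b with (a + Z.of_nat (Z.to_nat (b - a)))%Z by lia.
  rewrite powerRZ_add by apply phi_neq0. rewrite <- pow_powerRZ.
  pose proof (pow_R1_Rle phi (Z.to_nat (b-a)) ltac:(pose proof phi_gt1; lra)).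
  pose proof (powerRZ_lt phi a ltac:(pose proof phi_gt1; lra)). nra. Qed.

Lemma list_max (S : list Z) : S <> [] -> exists m, In m S /\ forall y, In y S -> (y <= m)%Z.
Proof. induction S as [|a S IH]; intros Hne; [congruence|].
  destruct S as [|b S'].
  - exists a. split; [left; auto|]. intros y [<-|[]]; lia.
  - destruct IH as [m [Hm Hmax]]; [discriminate|].
    destruct (Z_le_gt_dec a m).
    + exists m. split; [right; auto|]. intros y [<-|Hy]; [lia| apply Hmax; auto].
    + exists a. split; [left; auto|]. intros y [<-|Hy]; [lia| specialize (Hmax y Hy); lia].
Qed.

Lemma valid_remove l1 m l2 : valid (l1 ++ m :: l2) -> valid (l1 ++ l2).
Proof. intros [Hn Ha]. split; [eapply NoDup_remove_1; eauto|].
  intros i Hi Hi1. apply (Ha i).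
  - apply in_app_or in Hi; apply in_or_app; simpl; tauto.
  - apply in_app_or in Hi1; apply in_or_app; simpl; tauto. Qed.

Lemma sumphi_split l1 m l2 : sumphi (l1 ++ m :: l2) = powerRZ phi m + sumphi (l1 ++ l2).
Proof. rewrite !sumphi_app. unfold sumphi; simpl. lra. Qed.

Lemma decomp_max S : valid S -> S <> [] -> exists m l1 l2, S = l1 ++ m :: l2 /\
  valid (l1 ++ l2) /\ (forall y, In y (l1 ++ l2) -> (y <= m - 2)%Z) /\
  sumphi S = powerRZ phi m + sumphi (l1 ++ l2) /\ length S = Datatypes.S (length (l1 ++ l2)).
Proof. intros Hv Hne. destruct (list_max S Hne) as [m [Hm Hmax]].
  destruct (in_split _ _ Hm) as [l1 [l2 ->]]. exists m, l1, l2.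
  split; [auto|]. split; [eapply valid_remove; eauto|]. split.
  - intros y Hy. destruct Hv as [Hn Ha].
    assert (Hy' : In y (l1 ++ m :: l2)) by (apply in_app_or in Hy; apply in_or_app; simpl; tauto).
    assert (y <> m) by (intro; subst; eapply NoDup_remove_2; eauto).
    assert (y <> m - 1)%Z. { intro; subst. apply (Ha (m-1)%Z Hy'). replace (m-1+1)%Z with m by lia. auto. }
    specialize (Hmax y Hy'). lia.
  - split; [apply sumphi_split|]. rewrite !length_app; simpl; lia.
Qed.

Lemma sum_bound : forall n S L, length S = n -> valid S -> (forall y, In y S -> (y <= L)%Z) ->
  sumphi S < powerRZ phi (L + 1).
Proof. induction n as [n IH] using lt_wf_ind. intros S L Hl Hv Hb.
  destruct S as [|a S0].
  - simpl. apply powerRZ_lt. pose proof phi_gt1; lra.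
  - destruct (decomp_max _ Hv ltac:(discriminate)) as [m [l1 [l2 [HS [Hv' [Hb' [Hs Hlen]]]]]]].
    rewrite Hs. assert (HmL : (m <= L)%Z) by (apply Hb; rewrite HS; apply in_or_app; simpl; auto).
    assert (H1 := IH (length (l1 ++ l2)) ltac:(rewrite <- Hl, Hlen; lia) (l1 ++ l2) (m - 2)%Z eq_refl Hv' Hb').
    replace (m - 2 + 1)%Z with (m - 1)%Z in H1 by lia.
    assert (powerRZ phi (m + 1) <= powerRZ phi (L + 1)) by (apply pRZ_mono; lia).
    assert (E1 : powerRZ phi m = powerRZ phi (m - 1) * phi) by (rewrite <- pRZ_succ; f_equal; lia).
    assert (E2 : powerRZ phi (m+1) = powerRZ phi (m - 1) * phi * phi) by (rewrite pRZ_succ, E1; auto).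
    assert (E3 : powerRZ phi (m+1) = powerRZ phi m + powerRZ phi (m-1)).
    { rewrite E2, E1. replace (powerRZ phi (m - 1) * phi * phi) with (powerRZ phi (m - 1) * (phi * phi)) by ring.
      rewrite phi_sq. ring. }
    lra.
Qed.

Lemma sum_pos S : valid S -> S <> [] -> 0 < sumphi S.
Proof. intros Hv Hne. destruct (decomp_max _ Hv Hne) as [m [l1 [l2 [_ [_ [_ [Hs _]]]]]]].
  rewrite Hs. pose proof (sumphi_nonneg (l1++l2)). pose proof (powerRZ_lt phi m ltac:(pose proof phi_gt1; lra)). lra. Qed.

Lemma uniq_len : forall n S T, length S = n -> valid S -> valid T -> sumphi S = sumphi T -> length S = length T.
Proof. induction n as [n IH] using lt_wf_ind. intros S T Hl HvS HvT Heq.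
  destruct S as [|a S0]; destruct T as [|b T0]; auto.
  - exfalso. pose proof (sum_pos _ HvT ltac:(discriminate)). simpl in Heq. unfold sumphi in *; simpl in *. lra.
  - exfalso. pose proof (sum_pos _ HvS ltac:(discriminate)). unfold sumphi in *; simpl in *. lra.
  - destruct (decomp_max _ HvS ltac:(discriminate)) as [m [l1 [l2 [HS [Hv' [Hb' [Hs Hlen]]]]]]].
    destruct (decomp_max _ HvT ltac:(discriminate)) as [m' [k1 [k2 [HT [Hv'' [Hb'' [Ht Hlen']]]]]]].
    assert (B1 := sum_bound _ _ _ eq_refl Hv' Hb'). assert (B2 := sum_bound _ _ _ eq_refl Hv'' Hb'').
    replace (m - 2 + 1)%Z with (m - 1)%Z in B1 by lia. replace (m' - 2 + 1)%Z with (m' - 1)%Z in B2 by lia.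
    pose proof (sumphi_nonneg (l1++l2)). pose proof (sumphi_nonneg (k1++k2)).
    assert (F : forall k, powerRZ phi (k - 1) + powerRZ phi k = powerRZ phi (k + 1)).
    { intros k. assert (E1 : powerRZ phi k = powerRZ phi (k - 1) * phi) by (rewrite <- pRZ_succ; f_equal; lia).
      rewrite pRZ_succ, E1. replace (powerRZ phi (k - 1) * phi * phi) with (powerRZ phi (k - 1) * (phi * phi)) by ring.
      rewrite phi_sq. ring. }
    assert (m = m'). {
      destruct (Z.lt_trichotomy m m') as [Hlt|[?|Hlt]]; auto; exfalso.
      - pose proof (pRZ_mono (m+1) m' ltac:(lia)). pose proof (F m). lra.
      - pose proof (pRZ_mono (m'+1) m ltac:(lia)). pose proof (F m'). lra. }
    subst m'. rewrite Hlen, Hlen'. f_equal. eapply IH; [|reflexivity|eauto|eauto|].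
    + rewrite <- Hl, Hlen; lia.
    + lra.
Qed.

Lemma sbeta_len N S : valid S -> sumphi S = INR N -> sbeta N = length S.
Proof. intros Hv Hs. unfold sbeta.
  assert (Ex : exists k, exists S, phi_expansion N S /\ length S = k).
  { exists (length S), S. split; [|auto]. destruct Hv as [? ?]. split; [auto|split; auto]. }
  destruct (epsilon_spec (inhabits 0%nat) _ Ex) as [S' [[Hn [Ha Hs']] Hl]].
  rewrite <- Hl. symmetry. eapply uniq_len; eauto. split; auto. unfold sumphi. rewrite Hs'. auto.
Qed.

Fixpoint L (n : nat) : nat := match n with
  | O => 2%nat | Datatypes.S m => match m with O => 1%nat | Datatypes.S k => (L m + L k)%nat end end.

Lemma Lk k : L (k + 2) = (L (k + 1) + L k)%nat.
Proof. replace (k+2)%nat with (Datatypes.S (Datatypes.S k)) by lia. replace (k+1)%nat with (Datatypes.S k) by lia. reflexivity. Qed.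

Lemma LA n : L (2*n+2) = (L (2*n+1) + L (2*n))%nat.
Proof. rewrite <- Lk. f_equal. Qed.
Lemma LB n : L (2*n+3) = (L (2*n+2) + L (2*n+1))%nat.
Proof. pose proof (Lk (2*n+1)). replace (2*n+1+2)%nat with (2*n+3)%nat in H by lia.
  replace (2*n+1+1)%nat with (2*n+2)%nat in H by lia. auto. Qed.
Lemma LC n : L (2*n+4) = (L (2*n+3) + L (2*n+2))%nat.
Proof. pose proof (Lk (2*n+2)). replace (2*n+2+2)%nat with (2*n+4)%nat in H by lia.
  replace (2*n+2+1)%nat with (2*n+3)%nat in H by lia. auto. Qed.
Lemma Lpos k : (1 <= L k)%nat.
Proof. induction k as [k IH] using lt_wf_ind. destruct k as [|[|k]]; simpl; auto.
  specialize (IH (Datatypes.S k) ltac:(lia)). simpl in IH. lia. Qed.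
Lemma Lge k : (k <= L k)%nat.
Proof. induction k as [k IH] using lt_wf_ind. destruct k as [|[|k]]; simpl; auto.
  pose proof (IH (Datatypes.S k) ltac:(lia)). pose proof (IH k ltac:(lia)).
  destruct k; simpl in *; lia. Qed.
Lemma Leven_gt n : (2 <= L (2*n))%nat.
Proof. induction n. simpl; lia. replace (2 * Datatypes.S n)%nat with (2*n+2)%nat by lia.
  rewrite LA. lia. Qed.

Definition psi := 1 - phi.
Lemma L_real k : INR (L k) = phi ^ k + psi ^ k.
Proof. induction k as [k IH] using lt_wf_ind. destruct k as [|[|k]].
  - simpl. lra.
  - unfold psi; simpl; lra.
  - change (L (Datatypes.S (Datatypes.S k))) with (L (Datatypes.S k) + L k)%nat.
    rewrite plus_INR, (IH (Datatypes.S k)), (IH k) by lia.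
    assert (psi * psi = psi + 1) by (unfold psi; pose proof phi_sq; nra).
    pose proof phi_sq. simpl. replace (phi * (phi * phi ^ k)) with ((phi*phi) * phi^k) by ring.
    replace (psi * (psi * psi ^ k)) with ((psi*psi) * psi^k) by ring.
    rewrite H, H0. ring.
Qed.

Lemma psi_inv : psi = - / phi.
Proof. unfold psi. pose proof phi_sq. pose proof phi_neq0. assert (H1 : (1-phi)*phi = -1) by nra.
  replace (- / phi) with ((1-phi)*phi/phi) by (rewrite H1; field; auto). field; auto. Qed.

Lemma L_even n : INR (L (2*n)) = phi ^ (2*n) + / phi ^ (2*n).
Proof. rewrite L_real, psi_inv. rewrite pow_mult. rewrite pow_mult.
  replace ((- / phi) ^ 2) with (/ (phi ^ 2)). rewrite pow_inv. reflexivity.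
  pose proof phi_neq0. field. auto. Qed.

Lemma L_odd n : INR (L (2*n+1)) = phi ^ (2*n+1) - / phi ^ (2*n+1).
Proof. rewrite L_real, psi_inv. rewrite !pow_add, !pow_mult.
  replace ((- / phi) ^ 2) with (/ (phi ^ 2)). rewrite pow_inv. pose proof phi_neq0.
  assert ((phi ^ 2) ^ n <> 0) by (apply pow_nonzero; try apply pow_nonzero; auto).
  simpl. field. auto. pose proof phi_neq0. field. auto. Qed.

Definition E0 (N : nat) : list Z := match N with O => [] | 1%nat => [0%Z] | _ => [1%Z; (-2)%Z] end.
Definition T0 (m : nat) : list Z := if Nat.eqb m 1 then [(-1)%Z] else [1%Z].

Fixpoint ET (n : nat) : (nat -> list Z) * (nat -> list Z) :=
  match n with
  | O => (E0, T0)
  | Datatypes.S k => let '(E, T) := ET k in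
     (fun N => if (N <? L (2*k+2))%nat then E N
               else if (N <=? L (2*k+3))%nat then [Z.of_nat (2*k+2); (- Z.of_nat (2*k+2))%Z] ++ E (N - L (2*k+2))%nat
               else [Z.of_nat (2*k+3); (- Z.of_nat (2*k+4))%Z] ++ T (N - L (2*k+3))%nat,
      fun m => if (m <? L (2*k+2))%nat then (- Z.of_nat (2*k+3))%Z :: T m
               else if (m <=? L (2*k+3))%nat then [Z.of_nat (2*k+2); (- Z.of_nat (2*k+3))%Z] ++ E (m - L (2*k+2))%nat
               else Z.of_nat (2*k+3) :: T (m - L (2*k+3))%nat)
  end.

Definition Ef n := fst (ET n).
Definition Tf n := snd (ET n).

Lemma Ef_S n N : Ef (Datatypes.S n) N =
  if (N <? L (2*n+2))%nat then Ef n N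
  else if (N <=? L (2*n+3))%nat then [Z.of_nat (2*n+2); (- Z.of_nat (2*n+2))%Z] ++ Ef n (N - L (2*n+2))%nat
  else [Z.of_nat (2*n+3); (- Z.of_nat (2*n+4))%Z] ++ Tf n (N - L (2*n+3))%nat.
Proof. unfold Ef, Tf. simpl. destruct (ET n). reflexivity. Qed.

Lemma Tf_S n m : Tf (Datatypes.S n) m =
  if (m <? L (2*n+2))%nat then (- Z.of_nat (2*n+3))%Z :: Tf n m
  else if (m <=? L (2*n+3))%nat then [Z.of_nat (2*n+2); (- Z.of_nat (2*n+3))%Z] ++ Ef n (m - L (2*n+2))%nat
  else Z.of_nat (2*n+3) :: Tf n (m - L (2*n+3))%nat.
Proof. unfold Ef, Tf. simpl. destruct (ET n). reflexivity. Qed.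

Definition inb (lo hi : Z) (S : list Z) := forall i, In i S -> (lo <= i <= hi)%Z.

Lemma valid_cons x S : valid S -> (forall y, In y S -> (x + 2 <= y \/ y + 2 <= x)%Z) -> valid (x :: S).
Proof. intros [Hn Ha] Hd. split.
  - constructor; auto. intro Hx. specialize (Hd x Hx). lia.
  - intros i [<-|Hi] [Hj|Hj].
    + lia.
    + specialize (Hd _ Hj). lia.
    + specialize (Hd _ Hi). lia.
    + apply (Ha i Hi Hj).
Qed.

Lemma valid_nil : valid [].
Proof. split; [constructor| intros i []]. Qed.

Lemma pZn k : powerRZ phi (Z.of_nat k) = phi ^ k.
Proof. rewrite <- pow_powerRZ. auto. Qed.
Lemma pZm k : powerRZ phi (- Z.of_nat k) = / phi ^ k.
Proof. rewrite powerRZ_neg', pZn. auto. Qed.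

Lemma F1 a : a <> 0 -> / a = / (phi * a) + / (phi * (phi * a)).
Proof. intros Ha. pose proof phi_neq0. transitivity ((phi + 1) / (phi * (phi * a))).
  - rewrite <- phi_sq. field. auto.
  - field. auto. Qed.

Lemma inv_phi : / phi = phi - 1.
Proof. symmetry. apply Rmult_inv_r_uniq. apply phi_neq0. pose proof phi_sq. nra. Qed.
Lemma inv_phi2 : / (phi * phi) = 2 - phi.
Proof. symmetry. apply Rmult_inv_r_uniq. pose proof phi_neq0. apply Rmult_integral_contrapositive; auto.
  pose proof phi_sq. nra. Qed.

Lemma L_even' n : INR (L (2*n+2)) = phi ^ (2*n+2) + / phi ^ (2*n+2).
Proof. replace (2*n+2)%nat with (2 * Datatypes.S n)%nat by lia. apply L_even. Qed.
Lemma L_odd' n : INR (L (2*n+3)) = phi ^ (2*n+3) - / phi ^ (2*n+3).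
Proof. replace (2*n+3)%nat with (2 * Datatypes.S n + 1)%nat by lia. apply L_odd. Qed.

Lemma pow3 n : phi ^ (2*n+3) = phi * phi ^ (2*n+2).
Proof. replace (2*n+3)%nat with (Datatypes.S (2*n+2)) by lia. apply tech_pow_Rmult. Qed.
Lemma pow4 n : phi ^ (2*n+4) = phi * (phi * phi ^ (2*n+2)).
Proof. replace (2*n+4)%nat with (Datatypes.S (Datatypes.S (2*n+2))) by lia. rewrite !tech_pow_Rmult. auto. Qed.

Definition PE n := forall N, (N < L (2*n+2))%nat ->
  valid (Ef n N) /\ sumphi (Ef n N) = INR N /\
  inb (- Z.of_nat (2*n+2)) (Z.of_nat (2*n+1)) (Ef n N) /\
  ((N <= L (2*n+1))%nat -> inb (- Z.of_nat (2*n)) (Z.of_nat (2*n)) (Ef n N)).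
Definition PT n := forall m, (0 < m < L (2*n+2))%nat ->
  valid (Tf n m) /\ sumphi (Tf n m) = INR m - / phi ^ (2*n+2) /\
  inb (- Z.of_nat (2*n+1)) (Z.of_nat (2*n+1)) (Tf n m).

Lemma sum2 x y S : sumphi ([x; y] ++ S) = powerRZ phi x + powerRZ phi y + sumphi S.
Proof. unfold sumphi; simpl. ring. Qed.
Lemma sum1 x S : sumphi (x :: S) = powerRZ phi x + sumphi S.
Proof. reflexivity. Qed.

Lemma PQ0 : PE 0 /\ PT 0.
Proof. split.
  - intros N HN. simpl in HN. destruct N as [|[|[|N]]]; try lia; unfold Ef; simpl.
    + split; [apply valid_nil|]. split; [reflexivity|]. split; [intros i []| intros _ i []].
    + split; [apply valid_cons; [apply valid_nil| intros y []]|].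
      split; [unfold sumphi; simpl; lra|]. split; [intros i [<-|[]]; lia| intros _ i [<-|[]]; lia].
    + split; [apply valid_cons; [apply valid_cons; [apply valid_nil| intros y []]| intros y [<-|[]]; lia]|].
      split. { unfold sumphi; simpl. rewrite Rmult_1_r, inv_phi2. lra. }
      split; [intros i [<-|[<-|[]]]; lia| intros; lia].
  - intros m Hm. simpl in Hm. destruct m as [|[|[|m]]]; try lia; unfold Tf; simpl.
    + split; [apply valid_cons; [apply valid_nil| intros y []]|].
      split; [unfold sumphi; simpl; rewrite !Rmult_1_r, inv_phi2, inv_phi; lra|]. intros i [<-|[]]; lia.
    + split; [apply valid_cons; [apply valid_nil| intros y []]|].
      split; [unfold sumphi; simpl; rewrite !Rmult_1_r, inv_phi2; lra|]. intros i [<-|[]]; lia.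
Qed.

Lemma PQ_S n : PE n /\ PT n -> PE (Datatypes.S n) /\ PT (Datatypes.S n).
Proof. intros [HE HT]. unfold PE, PT.
  replace (2 * Datatypes.S n + 2)%nat with (2*n+4)%nat by lia.
  replace (2 * Datatypes.S n + 1)%nat with (2*n+3)%nat by lia.
  replace (2 * Datatypes.S n)%nat with (2*n+2)%nat by lia.
  pose proof (LA n) as LA0. pose proof (LB n) as LB0. pose proof (LC n) as LC0. pose proof (Leven_gt n) as LG0.
  assert (Hpa : phi ^ (2*n+2) <> 0) by (apply pow_nonzero; apply phi_neq0).
  pose proof (F1 _ Hpa) as HF.
  split.
  - intros N HN. rewrite Ef_S. destruct (Nat.ltb_spec N (L (2*n+2))) as [H1|H1].
    + destruct (HE N H1) as [Hv [Hs [Hb _]]]. split; [auto|]. split; [auto|].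
      split; [intros i Hi; specialize (Hb i Hi); lia| intros _ i Hi; specialize (Hb i Hi); lia].
    + destruct (Nat.leb_spec N (L (2*n+3))) as [H2|H2].
      * destruct (HE (N - L (2*n+2))%nat ltac:(lia)) as [Hv [Hs [Hb Hb']]].
        specialize (Hb' ltac:(lia)).
        split. { simpl. apply valid_cons; [apply valid_cons; auto|].
          - intros y Hy; specialize (Hb' y Hy); lia.
          - intros y [<-|Hy]; [lia|specialize (Hb' y Hy); lia]. }
        split. { rewrite sum2, pZn, pZm, Hs, minus_INR, L_even' by lia. lra. }
        split; [intros i [<-|[<-|Hi]]; try lia; specialize (Hb' i Hi); lia|
                intros _ i [<-|[<-|Hi]]; try lia; specialize (Hb' i Hi); lia].
      * destruct (HT (N - L (2*n+3))%nat ltac:(lia)) as [Hv [Hs Hb]].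
        split. { simpl. apply valid_cons; [apply valid_cons; auto|].
          - intros y Hy; specialize (Hb y Hy); lia.
          - intros y [<-|Hy]; [lia|specialize (Hb y Hy); lia]. }
        split. { rewrite sum2, pZn, pZm, Hs, minus_INR, L_odd' by lia. rewrite pow3, pow4. lra. }
        split; [intros i [<-|[<-|Hi]]; try lia; specialize (Hb i Hi); lia| intros; lia].
  - intros m Hm. rewrite Tf_S. destruct (Nat.ltb_spec m (L (2*n+2))) as [H1|H1].
    + destruct (HT m ltac:(lia)) as [Hv [Hs Hb]].
      split. { apply valid_cons; auto. intros y Hy; specialize (Hb y Hy); lia. }
      split. { rewrite sum1, pZm, Hs, pow3, pow4. lra. }
      intros i [<-|Hi]; [lia| specialize (Hb i Hi); lia].
    + destruct (Nat.leb_spec m (L (2*n+3))) as [H2|H2].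
      * destruct (HE (m - L (2*n+2))%nat ltac:(lia)) as [Hv [Hs [Hb Hb']]].
        specialize (Hb' ltac:(lia)).
        split. { simpl. apply valid_cons; [apply valid_cons; auto|].
          - intros y Hy; specialize (Hb' y Hy); lia.
          - intros y [<-|Hy]; [lia|specialize (Hb' y Hy); lia]. }
        split. { rewrite sum2, pZn, pZm, Hs, minus_INR, L_even' by lia. rewrite pow3, pow4. lra. }
        intros i [<-|[<-|Hi]]; try lia; specialize (Hb' i Hi); lia.
      * destruct (HT (m - L (2*n+3))%nat ltac:(lia)) as [Hv [Hs Hb]].
        split. { apply valid_cons; auto. intros y Hy; specialize (Hb y Hy); lia. }
        split. { rewrite sum1, pZn, Hs, minus_INR, L_odd' by lia. rewrite pow3, pow4. lra. }
        intros i [<-|Hi]; [lia| specialize (Hb i Hi); lia].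
Qed.

Lemma PQ_all n : PE n /\ PT n.
Proof. induction n. apply PQ0. apply PQ_S; auto. Qed.

Lemma sbeta_Ef n N : (N < L (2*n+2))%nat -> sbeta N = length (Ef n N).
Proof. intros H. destruct (proj1 (PQ_all n) N H) as [Hv [Hs _]]. apply sbeta_len; auto. Qed.
Import Pilot.Defs.
Close Scope R_scope.
Open Scope nat_scope.

Definition shl (j : nat) (a : letter) : letter := let (i, c) := a in ((j + i)%nat, c).
Definition gw (n : nat) (c : col) : list letter := Nat.iter n gamma_word [(0%nat, c)].
Definition W (n : nat) (c : col) : list nat := flat_map delta (gw n c).

Lemma gamma_shl j a : gamma (shl j a) = map (shl j) (gamma a).
Proof. destruct a as [i c]; destruct c; simpl; rewrite ?Nat.add_assoc; reflexivity. Qed.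
Lemma gamma_word_shl j w : gamma_word (map (shl j) w) = map (shl j) (gamma_word w).
Proof. induction w; simpl; auto. unfold gamma_word in *. simpl. rewrite gamma_shl, IHw, map_app. auto. Qed.
Lemma iter_shl n j w : Nat.iter n gamma_word (map (shl j) w) = map (shl j) (Nat.iter n gamma_word w).
Proof. induction n; simpl; auto. rewrite IHn, gamma_word_shl. auto. Qed.
Lemma iter_app n a b : Nat.iter n gamma_word (a ++ b) = Nat.iter n gamma_word a ++ Nat.iter n gamma_word b.
Proof. induction n; simpl; auto. rewrite IHn. unfold gamma_word. apply flat_map_app. Qed.
Lemma iter_single n j c : Nat.iter n gamma_word [(j, c)] = map (shl j) (gw n c).
Proof. unfold gw. rewrite <- iter_shl. simpl. rewrite Nat.add_0_r. auto. Qed.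
Lemma iter_cons n a w : Nat.iter n gamma_word (a :: w) = Nat.iter n gamma_word [a] ++ Nat.iter n gamma_word w.
Proof. rewrite <- iter_app. auto. Qed.

Lemma delta_shl j a : delta (shl j a) = map (Nat.add j) (delta a).
Proof. destruct a as [i c]; destruct c; simpl; rewrite ?Nat.add_assoc; reflexivity. Qed.
Lemma fm_shl j w : flat_map delta (map (shl j) w) = map (Nat.add j) (flat_map delta w).
Proof. induction w; simpl; auto. rewrite delta_shl, IHw, map_app. auto. Qed.
Lemma map_add0 l : map (Nat.add 0) l = l.
Proof. induction l; [auto|]. cbn [map]. rewrite IHl. reflexivity. Qed.

Lemma W_single n j c : flat_map delta (Nat.iter n gamma_word [(j, c)]) = map (Nat.add j) (W n c).
Proof. rewrite iter_single, fm_shl. auto. Qed.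

Lemma gw_S n c : gw (Datatypes.S n) c = Nat.iter n gamma_word (gamma_word [(0%nat, c)]).
Proof. unfold gw. apply Nat.iter_succ_r. Qed.

Lemma W0 n : W (Datatypes.S n) c0 = W n c0 ++ W n c1.
Proof. unfold W at 1. rewrite gw_S. change (gamma_word [(0%nat, c0)]) with ([(0%nat,c0)] ++ [(0%nat,c1)]).
  rewrite iter_app, flat_map_app, !W_single, !map_add0. auto. Qed.
Lemma W1 n : W (Datatypes.S n) c1 = W n c2 ++ W n c3.
Proof. unfold W at 1. rewrite gw_S. change (gamma_word [(0%nat, c1)]) with ([(0%nat,c2)] ++ [(0%nat,c3)]).
  rewrite iter_app, flat_map_app, !W_single, !map_add0. auto. Qed.
Lemma W2 n : W (Datatypes.S n) c2 = map (Nat.add 2) (W n c0) ++ map (Nat.add 2) (W n c1) ++ map (Nat.add 2) (W n c2).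
Proof. unfold W at 1. rewrite gw_S. change (gamma_word [(0%nat, c2)]) with ([(2%nat,c0)] ++ [(2%nat,c1)] ++ [(2%nat,c2)]).
  rewrite !iter_app, !flat_map_app, !W_single. auto. Qed.
Lemma W3 n : W (Datatypes.S n) c3 = map (Nat.add 1) (W n c3) ++ map (Nat.add 2) (W n c2) ++ map (Nat.add 1) (W n c3).
Proof. unfold W at 1. rewrite gw_S. change (gamma_word [(0%nat, c3)]) with ([(1%nat,c3)] ++ [(2%nat,c2)] ++ [(1%nat,c3)]).
  rewrite !iter_app, !flat_map_app, !W_single. auto. Qed.

Lemma map_seq_shift {B} (f : nat -> B) n : forall s t, map f (seq (s + t) n) = map (fun k => f (s + k)) (seq t n).
Proof. induction n; intros s t; simpl; auto. f_equal. replace (Datatypes.S (s + t)) with (s + Datatypes.S t) by lia. apply IHn. Qed.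
Lemma map_split {B} (f : nat -> B) a b : map f (seq 0 (a + b)) = map f (seq 0 a) ++ map (fun k => f (a + k)) (seq 0 b).
Proof. rewrite seq_app, map_app. f_equal. replace (0 + a)%nat with (a + 0)%nat by lia. apply map_seq_shift. Qed.

Lemma Ef_lo n N : (N < L (2*n+2))%nat -> Ef (Datatypes.S n) N = Ef n N.
Proof. intros H. rewrite Ef_S. destruct (Nat.ltb_spec N (L (2*n+2))); [auto|lia]. Qed.
Lemma Ef_mid n N k : N = (L (2*n+2) + k)%nat -> (k <= L (2*n+1))%nat ->
  Ef (Datatypes.S n) N = [Z.of_nat (2*n+2); (- Z.of_nat (2*n+2))%Z] ++ Ef n k.
Proof. intros H1 H2. pose proof (LB n). rewrite Ef_S. destruct (Nat.ltb_spec N (L (2*n+2))); [lia|].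
  destruct (Nat.leb_spec N (L (2*n+3))); [|lia]. f_equal. f_equal. lia. Qed.
Lemma Ef_hi n N k : N = (L (2*n+3) + k)%nat -> (0 < k)%nat ->
  Ef (Datatypes.S n) N = [Z.of_nat (2*n+3); (- Z.of_nat (2*n+4))%Z] ++ Tf n k.
Proof. intros H1 H2. pose proof (LB n). rewrite Ef_S. destruct (Nat.ltb_spec N (L (2*n+2))); [lia|].
  destruct (Nat.leb_spec N (L (2*n+3))); [lia|]. f_equal. f_equal. lia. Qed.
Lemma Tf_lo n m : (m < L (2*n+2))%nat -> Tf (Datatypes.S n) m = (- Z.of_nat (2*n+3))%Z :: Tf n m.
Proof. intros H. rewrite Tf_S. destruct (Nat.ltb_spec m (L (2*n+2))); [auto|lia]. Qed.
Lemma Tf_mid n N k : N = (L (2*n+2) + k)%nat -> (k <= L (2*n+1))%nat ->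
  Tf (Datatypes.S n) N = [Z.of_nat (2*n+2); (- Z.of_nat (2*n+3))%Z] ++ Ef n k.
Proof. intros H1 H2. pose proof (LB n). rewrite Tf_S. destruct (Nat.ltb_spec N (L (2*n+2))); [lia|].
  destruct (Nat.leb_spec N (L (2*n+3))); [|lia]. f_equal. f_equal. lia. Qed.
Lemma Tf_hi n N k : N = (L (2*n+3) + k)%nat -> (0 < k)%nat ->
  Tf (Datatypes.S n) N = Z.of_nat (2*n+3) :: Tf n k.
Proof. intros H1 H2. pose proof (LB n). rewrite Tf_S. destruct (Nat.ltb_spec N (L (2*n+2))); [lia|].
  destruct (Nat.leb_spec N (L (2*n+3))); [lia|]. f_equal. f_equal. lia. Qed.

Definition WL n :=
  W n c0 = map (fun k => length (Ef n k)) (seq 0 (L (2*n))) /\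
  W n c1 = map (fun k => length (Ef n (L (2*n) + k))) (seq 0 (L (2*n+1))) /\
  W n c2 = map (fun k => 2 + length (Ef n k))%nat (seq 0 (L (2*n+1) + 1)) /\
  W n c3 = map (fun k => 2 + length (Tf n (k+1)))%nat (seq 0 (L (2*n+2) - 1)).

Lemma WL0 : WL 0.
Proof. repeat split; reflexivity. Qed.

Ltac pw := apply map_ext_in; intros k Hk; apply in_seq in Hk.

Lemma WL_S n : WL n -> WL (Datatypes.S n).
Proof. intros [H0 [H1 [H2 H3]]]. unfold WL.
  replace (2 * Datatypes.S n + 2)%nat with (2*n+4)%nat by lia.
  replace (2 * Datatypes.S n + 1)%nat with (2*n+3)%nat by lia.
  replace (2 * Datatypes.S n)%nat with (2*n+2)%nat by lia.
  pose proof (LA n) as LA0. pose proof (LB n) as LB0. pose proof (LC n) as LC0.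
  pose proof (Leven_gt n) as LG0. pose proof (Lpos (2*n+1)) as LP1.
  split; [|split; [|split]].
  - replace (L (2*n+2)) with (L (2*n) + L (2*n+1))%nat by lia.
    rewrite map_split, W0, H0, H1. f_equal.
    + pw. rewrite Ef_lo by lia. auto.
    + pw. rewrite Ef_lo by lia. auto.
  - replace (L (2*n+3)) with ((L (2*n+1) + 1) + (L (2*n+2) - 1))%nat by lia.
    rewrite map_split, W1, H2, H3. f_equal.
    + pw. rewrite (Ef_mid n _ k) by lia. simpl. lia.
    + pw. rewrite (Ef_hi n _ (k+1)) by lia. simpl. lia.
  - replace (L (2*n+3) + 1)%nat with (L (2*n) + (L (2*n+1) + (L (2*n+1) + 1)))%nat by lia.
    rewrite map_split, map_split, W2, H0, H1, H2, !map_map. f_equal; [|f_equal].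
    + pw. rewrite Ef_lo by lia. auto.
    + pw. rewrite Ef_lo by lia. auto.
    + pw. rewrite (Ef_mid n _ k) by lia. simpl. lia.
  - replace (L (2*n+4) - 1)%nat with ((L (2*n+2) - 1) + ((L (2*n+1) + 1) + (L (2*n+2) - 1)))%nat by lia.
    rewrite map_split, map_split, W3, H2, H3, !map_map. f_equal; [|f_equal].
    + pw. rewrite Tf_lo by lia. simpl. lia.
    + pw. rewrite (Tf_mid n _ k) by lia. simpl. lia.
    + pw. rewrite (Tf_hi n _ (k+1)) by lia. simpl. lia.
Qed.

Lemma WL_all n : WL n.
Proof. induction n. apply WL0. apply WL_S; auto. Qed.

Lemma gi_S n : gamma_iter (Datatypes.S n) = gamma_iter n ++ gw n c1.
Proof. unfold gamma_iter. rewrite Nat.iter_succ_r.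
  change (gamma_word [(0%nat, c0)]) with ([(0%nat,c0)] ++ [(0%nat,c1)]).
  rewrite iter_app. auto. Qed.

Lemma gw_nonempty n c : gw n c <> [].
Proof. induction n; unfold gw in *; simpl; [discriminate|].
  destruct (Nat.iter n gamma_word [(0%nat, c)]) as [|a w]; [congruence|].
  unfold gamma_word; simpl. destruct a as [i []]; simpl; discriminate. Qed.

Lemma gi_len n : (Datatypes.S n <= length (gamma_iter n))%nat.
Proof. induction n; [simpl; lia|]. rewrite gi_S, length_app.
  pose proof (gw_nonempty n c1). destruct (gw n c1); [congruence|]. simpl. lia. Qed.

Lemma gi_prefix n k : exists r, gamma_iter (n + k) = gamma_iter n ++ r.
Proof. induction k. exists []. rewrite Nat.add_0_r, app_nil_r. auto.
  destruct IHk as [r Hr]. exists (r ++ gw (n+k) c1).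
  replace (n + Datatypes.S k)%nat with (Datatypes.S (n+k)) by lia. rewrite gi_S, Hr, app_assoc. auto. Qed.

Lemma xg_nth i M d : (Datatypes.S i <= M)%nat -> x_gamma i = nth i (gamma_iter M) d.
Proof. intros H. destruct (gi_prefix (Datatypes.S i) (M - Datatypes.S i)) as [r Hr].
  replace (Datatypes.S i + (M - Datatypes.S i))%nat with M in Hr by lia. rewrite Hr.
  pose proof (gi_len i). pose proof (gi_len (Datatypes.S i)).
  rewrite app_nth1 by lia. unfold x_gamma. apply nth_indep. lia. Qed.

Lemma map_firstn (f : nat -> letter) G k : (forall i, (i < k)%nat -> f i = nth i G (f 0%nat)) ->
  (k <= length G)%nat -> map f (seq 0 k) = firstn k G.
Proof. intros H Hk. apply nth_ext with (d := f 0%nat) (d' := f 0%nat).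
  - rewrite length_map, length_seq, length_firstn. lia.
  - intros i Hi. rewrite length_map, length_seq in Hi. rewrite map_nth, seq_nth by lia.
    rewrite nth_firstn. destruct (Nat.ltb_spec i k); [|lia]. apply H. lia. Qed.

Lemma fm_len w : (length w <= length (flat_map delta w))%nat.
Proof. induction w; simpl; auto. rewrite length_app. destruct a as [i []]; simpl; lia. Qed.

Theorem theorem5 : forall N : nat, delta_inf x_gamma N = sbeta N.
Proof. intros N. unfold delta_inf. set (M := Datatypes.S N). set (G := gamma_iter M).
  assert (HG : (Datatypes.S N <= length G)%nat) by (apply (Nat.le_trans _ (Datatypes.S M)); [lia| apply gi_len]).
  rewrite (map_firstn x_gamma G) by (auto; intros i Hi; apply xg_nth; lia).
  assert (Hl : (Datatypes.S N <= length (flat_map delta (firstn (Datatypes.S N) G)))%nat).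
  { eapply Nat.le_trans; [|apply fm_len]. rewrite length_firstn. lia. }
  assert (E : nth N (flat_map delta (firstn (Datatypes.S N) G)) 0%nat = nth N (flat_map delta G) 0%nat).
  { rewrite <- (firstn_skipn (Datatypes.S N) G) at 2. rewrite flat_map_app, app_nth1 by lia. auto. }
  unfold M in *. rewrite E. fold M. change (flat_map delta G) with (W M c0).
  destruct (WL_all M) as [H0 _]. rewrite H0.
  assert (HL : (N < L (2*M))%nat) by (pose proof (Lge (2*M)); lia).
  rewrite (@nth_indep nat _ N 0%nat (length (Ef M 0%nat))) by (rewrite length_map, length_seq; lia).
  change (length (Ef M 0%nat)) with ((fun k => length (Ef M k)) 0%nat). rewrite map_nth, seq_nth by lia. simpl Nat.add.
  symmetry. apply sbeta_Ef. pose proof (LA M). replace (2 * M)%nat with (2*M)%nat in HL by lia. lia.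
Qed.
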